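(* Let $c$ be a minimal-cellular cubic coordinate of size $n$ and let $i\in[n-1]$. If $c'=\uparrow_{i+1}(\uparrow_{i+2}(\cdots(\uparrow_{n-1}(c))\cdots))$ is well-defined (for $i=n-1$ this is $c'=c$), then $\uparrow_i(c')$ is well-defined.
   Context: A Tamari diagram of size $n$ is a word $u=u_1\cdots u_n$ of integers with $0\leq u_i\leq n-i$ and $u_{i+j}\leq u_i-j$ for all $i\in[n]$, $0\leq j\leq u_i$. A dual Tamari diagram of size $n$ is a word $v$ of integers with $0\leq v_i\leq i-1$ and $v_{i-j}\leq v_i-j$ for all $i\in[n]$, $0\leq j\leq v_i$. $(u,v)$ is a Tamari interval diagram if moreover for all $1\leq i<j\leq n$ with $j-i\leq u_i$ one has $v_j<j-i$. A cubic coordinate of size $n$ is $c\in\mathbb{Z}^{n-1}$ such that $(u,v)$ with $u_i=\max(c_i,0)$ ($i\in[n-1]$), $u_n=0$, $v_1=0$, $v_i=|\min(c_{i-1},0)|$ ($2\leq i\leq n$) is a Tamari interval diagram. For a cubic coordinate $c$ and $i\in[n-1]$, the minimal increase $\uparrow_i(c)$ is well-defined when there exists a cubic coordinate agreeing with $c$ outside position $i$ and with $i$-th entry $>c_i$; then $\uparrow_i(c)$ is obtained from $c$ by replacing $c_i$ by the smallest integer $t>c_i$ such that the result is a cubic coordinate (equivalently, it covers $c$ in the componentwise order and differs from $c$ only at position $i$). $c$ is minimal-cellular if $\uparrow_i(c)$ is well-defined for every $i\in[n-1]$. *)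

(* Defs.v *)
From mathcomp Require Import all_boot all_order all_algebra.
Set Implicit Arguments. Unset Strict Implicit. Unset Printing Implicit Defensive.
Import Order.TTheory GRing.Theory Num.Theory.
Local Open Scope ring_scope.

(* Words are 1-indexed functions nat -> nat (only positions 1..n matter). *)

Definition tamari_diagram (n : nat) (u : nat -> nat) : Prop :=
  forall i : nat, (1 <= i <= n)%N ->
    (u i <= n - i)%N /\ (forall j : nat, (j <= u i)%N -> (u (i + j) <= u i - j)%N).

Definition dual_tamari_diagram (n : nat) (v : nat -> nat) : Prop :=
  forall i : nat, (1 <= i <= n)%N ->
    (v i <= i - 1)%N /\ (forall j : nat, (j <= v i)%N -> (v (i - j) <= v i - j)%N).

Definition tamari_interval_diagram (n : nat) (u v : nat -> nat) : Prop :=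
  [/\ tamari_diagram n u, dual_tamari_diagram n v &
      forall i j : nat, (1 <= i)%N -> (i < j)%N -> (j <= n)%N ->
        (j - i <= u i)%N -> (v j < j - i)%N].

Definition ccoord (c : seq int) (i : nat) : int := nth 0 c i.-1.

Definition u_of (c : seq int) (i : nat) : nat :=
  if (1 <= i <= size c)%N then `|Num.max (ccoord c i) 0|%N else 0%N.

Definition v_of (c : seq int) (i : nat) : nat :=
  if (2 <= i <= (size c).+1)%N then `|Num.min (ccoord c i.-1) 0|%N else 0%N.

Definition cubic_coordinate (n : nat) (c : seq int) : Prop :=
  size c = n.-1 /\ tamari_interval_diagram n (u_of c) (v_of c).

Definition cset (c : seq int) (i : nat) (t : int) : seq int := set_nth 0 c i.-1 t.

Definition up_defined (n : nat) (c : seq int) (i : nat) : Prop :=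
  exists t : int, ccoord c i < t /\ cubic_coordinate n (cset c i t).

Definition is_up (n : nat) (c : seq int) (i : nat) (d : seq int) : Prop :=
  exists t : int, [/\ ccoord c i < t, cubic_coordinate n (cset c i t),
    d = cset c i t &
    forall t' : int, ccoord c i < t' < t -> ~ cubic_coordinate n (cset c i t')].

Definition minimal_cellular (n : nat) (c : seq int) : Prop :=
  cubic_coordinate n c /\
  forall i : nat, (1 <= i <= n.-1)%N -> up_defined n c i.

(* ups n c i d  <->  d = ↑_{i+1}(↑_{i+2}(...(↑_{n-1}(c))...)) is well-defined;
   for i = n-1 this is d = c. *)
Inductive ups (n : nat) (c : seq int) : nat -> seq int -> Prop :=
  | ups_base : ups n c n.-1 c
  | ups_step (i : nat) (d e : seq int) :
      ups n c i.+1 d -> is_up n d i.+1 e -> ups n c i e.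

(* Main.v *)
Require Import Defs.
From mathcomp Require Import all_boot all_order all_algebra zify.
From Stdlib Require Import FunctionalExtensionality Classical.
Import Order.TTheory GRing.Theory Num.Theory.
Local Open Scope ring_scope.

Lemma size_cset c i t : (1 <= i <= size c)%N -> size (cset c i t) = size c.
Proof. move=> h; rewrite /cset size_set_nth; apply/maxn_idPr; lia. Qed.

Lemma u_of_cset c i t : (1 <= i <= size c)%N ->
  u_of (cset c i t) = fun k => if k == i then `|Num.max t 0|%N else u_of c k.
Proof.
move=> h; apply: functional_extensionality => k.
rewrite /u_of /ccoord size_cset // /cset nth_set_nth /=.
case: (k =P i) => [->|hk]; first by rewrite h eqxx.
case: ifP => // /andP [k1 _]; case: eqP => // e; exfalso; lia.
Qed.

Lemma v_of_cset c i t : (1 <= i <= size c)%N ->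
  v_of (cset c i t) = fun k => if k == i.+1 then `|Num.min t 0|%N else v_of c k.
Proof.
move=> h; apply: functional_extensionality => k.
rewrite /v_of /ccoord size_cset // /cset nth_set_nth /=.
case: (k =P i.+1) => [->|hk]. rewrite eqxx; have -> : (1 < i.+1 <= (size c).+1)%N by lia. by [].
case: ifP => // /andP [k1 _]; case: eqP => // e; exfalso; lia.
Qed.

Lemma z0 : Posz 0 = 0%R. Proof. by []. Qed.
Lemma up_pos (m : nat) : `|Num.max (Posz m) (Posz 0)|%N = m.
Proof. by rewrite z0 max_l. Qed.
Lemma up_neg (x : int) : (x < 0)%R -> `|Num.max x (Posz 0)|%N = 0%N.
Proof. by move=> h; rewrite z0 max_r ?ltW. Qed.
Lemma vp_pos (m : nat) : `|Num.min (Posz m) (Posz 0)|%N = 0%N.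
Proof. by rewrite z0 min_r. Qed.
Lemma vp_anti (x y : int) : (x <= y)%R -> (`|Num.min y (Posz 0)| <= `|Num.min x (Posz 0)|)%N.
Proof.
rewrite z0 => h; case: (lerP 0 x) => hx; case: (lerP 0 y) => hy //=.
all: try (exfalso; have := lt_le_trans hy (le_trans hx h); by rewrite ltxx).
lia.
Qed.

Lemma ups_props n c i c' : ups n c i c' -> cubic_coordinate n c ->
  [/\ cubic_coordinate n c',
      forall m, (m < i)%N -> nth 0 c' m = nth 0 c m &
      forall m, (nth 0 c m <= nth 0 c' m)%R].
Proof.
elim=> [|j d e _ IH [t [ht cub -> _]]] cc; first by split.
have [cd h1 h2] := IH cc.
split=> //.
  move=> m hm; rewrite /cset nth_set_nth /=.
  by case: eqP => [e'|_]; [exfalso; lia| apply: h1; lia].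
move=> m; rewrite /cset nth_set_nth /=.
case: eqP => [->|_]; last exact: h2.
apply: le_trans (h2 j) (ltW _); exact: ht.
Qed.
Definition PP (n : nat) (u v : nat -> nat) (i e : nat) : Prop :=
  [/\ (e <= n)%N,
      (forall i', 1 <= i' -> i' < i -> i - i' <= u i' -> e <= i' + u i')%N &
      (forall k, i < k -> k <= e -> v k < k - i)%N].

Lemma crossing (P : nat -> Prop) (B m : nat) :
  (forall e, P e -> e <= B)%N -> P m -> exists e, (m <= e)%N /\ P e /\ ~ P e.+1.
Proof.
move=> hB.
suff: forall d m, (B - m <= d)%N -> P m -> exists e, (m <= e)%N /\ P e /\ ~ P e.+1.
  by move=> h; apply: h.
elim=> [|d IH] m' hd Pm'.
  exists m'; split=> //; split=> // /hB; have := hB _ Pm'; lia.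
case: (classic (P m'.+1)) => h.
  have [e [h1 h2]] := IH m'.+1 ltac:(have := hB _ h; lia) h.
  exists e; split=> //; lia.
by exists m'.
Qed.

Lemma coreA n (u v : nat -> nat) i e :
  tamari_interval_diagram n u v -> (1 <= i)%N -> (i < e)%N ->
  PP n u v i e -> ~ PP n u v i e.+1 ->
  tamari_interval_diagram n (fun k => if k == i then e - i else u k)%N v.
Proof.
move=> [Tu Tv TI] i1 ie [Pn Pe Pv] nP.
have closure : forall k, (i < k)%N -> (k <= e)%N -> (k + u k <= e)%N.
  move=> k ik ke; case: (leqP (k + u k) e) => // hlt; exfalso; apply: nP.
  have [Tk1 Tk2] := Tu k ltac:(lia).
  split.
  - lia.
  - move=> i' i1' ii' hu.
    have [Ti1 Ti2] := Tu i' ltac:(lia).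
    have := Pe i' i1' ii' hu => hh.
    have := Ti2 (k - i')%N ltac:(lia).
    have -> : (i' + (k - i') = k)%N by lia.
    lia.
  - move=> k' ik' ke'.
    case: (leqP k' e) => hk'; first exact: Pv.
    have -> : k' = e.+1 by lia.
    have := TI k e.+1 ltac:(lia) ltac:(lia) ltac:(lia) ltac:(lia).
    lia.
split=> //.
- move=> k /andP [k1 kn].
  case: eqP => [->|/eqP kni].
    split; first lia.
    move=> j hj.
    case: eqP => [hh|/eqP hne]; first lia.
    have := closure (i + j)%N ltac:(lia) ltac:(lia); lia.
  have [Tk1 Tk2] := Tu k ltac:(lia).
  split=> // j hj.
  case: eqP => [hij|/eqP hne]; last exact: Tk2.
  have := Pe k ltac:(lia) ltac:(lia) ltac:(lia); lia.
- move=> i0 j i01 i0j jn.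
  case: eqP => [hi|_ ]; last exact: TI.
  move=> hj; subst i0; apply: Pv; lia.
Qed.

Lemma coreB n (u v : nat -> nat) m0 :
  tamari_interval_diagram n u v ->
  tamari_interval_diagram n u (fun k => if k == m0 then 0 else v k)%N.
Proof.
move=> [Tu Tv TI]; split=> //.
- move=> k hk; have [Tk1 Tk2] := Tv k hk.
  case: eqP => [hk0|hk0].
    split; first lia.
    move=> j; rewrite leqn0 => /eqP ->; rewrite subn0; case: eqP => //.
  split=> // j hj; case: eqP => _ //; exact: Tk2.
- move=> i j i1 ij jn hu; case: eqP => _; first lia. exact: TI.
Qed.

Theorem lemma4p3 (n : nat) (c : seq int) (i : nat) (c' : seq int) :
  minimal_cellular n c -> (1 <= i <= n.-1)%N -> ups n c i c' ->
  up_defined n c' i.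
Proof.
move=> [cc hup] hi hups.
have [cc' h1 h2] := @ups_props _ _ _ _ hups cc.
have [sz' T'] := cc'. have [sz T] := cc.
have hi' : (1 <= i <= size c')%N by rewrite sz'; lia.
have hic : (1 <= i <= size c)%N by rewrite sz; lia.
have hx : ccoord c' i = ccoord c i by rewrite /ccoord h1 //; lia.
case: (ltrP (ccoord c i) 0) => hneg.
  exists (Posz 0); split; first by rewrite hx.
  split; first by rewrite size_cset.
  rewrite u_of_cset // v_of_cset // vp_pos.
  have -> : (fun k => if k == i then `|Num.max (Posz 0) (Posz 0)|%N else u_of c' k) = u_of c'.
    apply: functional_extensionality => k; case: eqP => // ->.
    by rewrite up_pos /u_of hi' hx up_neg.
  exact: coreB.
have [a ha] : exists a, ccoord c i = Posz a.
  by move: hneg; case: (ccoord c i) => [a|a] // _; exists a.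
have [t0 [ht0 cct0]] := hup i hi.
have [b hb] : exists b, t0 = Posz b.
  by move: ht0; rewrite ha; case: (t0) => [b|b] // _; exists b.
have ab : (a < b)%N by move: ht0; rewrite ha hb ltz_nat.
have Ev : forall d, ccoord d i = Posz a -> (1 <= i <= size d)%N ->
   (fun k => if k == i.+1 then 0%N else v_of d k) = v_of d.
  move=> d hd hid; apply: functional_extensionality => k; case: eqP => // ->.
  rewrite /v_of /=; have -> : (1 < i.+1 <= (size d).+1)%N by lia.
  by rewrite hd vp_pos.
have [_ [Tu0 Tv0 TI0]] := cct0.
rewrite u_of_cset // v_of_cset // hb up_pos vp_pos Ev // in Tu0 Tv0 TI0.
have F1 : (i + b <= n)%N.
  have [h _] := Tu0 i ltac:(lia); move: h; rewrite eqxx; lia.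
have F2 : forall i', (1 <= i')%N -> (i' < i)%N -> (i - i' <= u_of c i')%N ->
    (i + b <= i' + u_of c i')%N.
  move=> i' i1 ii hu.
  have [_ h] := Tu0 i' ltac:(lia).
  have := h (i - i')%N; rewrite (_ : i' == i = false); last by apply/eqP; lia.
  move=> /(_ hu); have -> : (i' + (i - i') = i)%N by lia.
  rewrite eqxx; lia.
have F3 : forall k, (i < k)%N -> (k <= i + b)%N -> (v_of c k < k - i)%N.
  move=> k ik kb; have := TI0 i k; rewrite eqxx.
  case: eqP => [hk|_] h; last by apply: h; lia.
  have := Ev c ha hic => /(congr1 (fun f => f k)) /=; rewrite hk eqxx => <-; lia.
have Eu : forall i', (1 <= i')%N -> (i' < i)%N -> u_of c' i' = u_of c i'.
  move=> i' i1 ii; rewrite /u_of /ccoord sz sz' h1 //; lia.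
have Evv : forall k, (v_of c' k <= v_of c k)%N.
  move=> k; rewrite /v_of sz sz'; case: ifP => // _; exact: vp_anti (h2 _).
have P0 : PP n (u_of c') (v_of c') i (i + a + 1).
  split.
  - lia.
  - move=> i' i1 ii; rewrite Eu // => hu; have := F2 i' i1 ii hu; lia.
  - move=> k ik kb; have := F3 k ik ltac:(lia); have := Evv k; lia.
have [e [he [Pe nPe]]] := @crossing (PP n (u_of c') (v_of c') i) n (i + a + 1)%N
  (fun e (h : PP n _ _ i e) => let: And3 x _ _ := h in x) P0.
exists (Posz (e - i)); split.
  by rewrite hx ha ltz_nat; lia.
split; first by rewrite size_cset.
rewrite u_of_cset // v_of_cset // up_pos vp_pos Ev //; last by rewrite hx.
apply: coreA => //; lia.
Qed.
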